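(* Let $r\ge 2$ and let $G$ be a graph on $n$ vertices. If $e(G)\ge e(T_r(n))$, then $\lambda(G)\ge \lambda(T_r(n))$. Moreover, if $e(G)\ge e(T_r(n))$ and $\lambda(G)=\lambda(T_r(n))$, then $G\in\mathcal{F}_r(n)$. Conversely, every $G\in\mathcal{F}_r(n)$ satisfies $e(G)=e(T_r(n))$ and $\lambda(G)=\lambda(T_r(n))$.
   Context: All graphs are finite and simple; $e(G)$ is the number of edges and $\lambda(G)$ the spectral radius of the adjacency matrix. $T_r(n)$ is the complete $r$-partite graph on $n$ vertices with part sizes differing by at most one. The family $\mathcal{F}_r(n)$: write $n=ra+b$ with $0\le b<r$ and $a=\lfloor n/r\rfloor$. If $b=0$, $\mathcal{F}_r(n)$ is the set of all $(r-1)a$-regular graphs on $n$ vertices. If $1\le b<r$, $\mathcal{F}_r(n)$ is the set of all graphs $G$ on $n$ vertices having a partition $V(G)=X\sqcup Y$ with $|X|=b(a+1)$, $|Y|=(r-b)a$, such that every vertex of $X$ is adjacent to every vertex of $Y$, $G[X]$ is $(b-1)(a+1)$-regular, and $G[Y]$ is $(r-b-1)a$-regular. *)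

(* Defs.v *)
From mathcomp Require Import all_boot all_order all_algebra all_field.
Set Implicit Arguments. Unset Strict Implicit. Unset Printing Implicit Defensive.
Import Order.TTheory GRing.Theory Num.Theory.

Local Open Scope ring_scope.

Definition simple_graph n (G : rel 'I_n) : Prop := symmetric G /\ irreflexive G.

Definition nedges n (G : rel 'I_n) : nat :=
  #|[set p : 'I_n * 'I_n | G p.1 p.2 && (p.1 < p.2)%N]|.

Definition adjmx n (G : rel 'I_n) : 'M[algC]_n := \matrix_(i, j) (G i j)%:R.

Definition rootsC (p : {poly algC}) : seq algC := sval (closed_field_poly_normal p).

Definition spectral_radius n (A : 'M[algC]_n) : algC :=
  \big[Num.max/0]_(z <- rootsC (char_poly A)) `|z|.

Definition lambda n (G : rel 'I_n) : algC := spectral_radius (adjmx G).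

(* Turan graph T_r(n): vertex i lies in part (i mod r); parts have sizes
   floor(n/r) or ceil(n/r); adjacent iff in different parts. *)
Definition turan (r n : nat) : rel 'I_n := fun i j => (i %% r != j %% r)%N.
Arguments turan r n : clear implicits.

Definition deg_in n (G : rel 'I_n) (S : {set 'I_n}) (x : 'I_n) : nat :=
  #|[set y in S | G x y]|.

Definition regular_in n (G : rel 'I_n) (S : {set 'I_n}) (d : nat) : Prop :=
  forall x, x \in S -> deg_in G S x = d.

Definition family_F (r n : nat) (G : rel 'I_n) : Prop :=
  let a := (n %/ r)%N in let b := (n %% r)%N in
  if b == 0%N then regular_in G setT ((r - 1) * a)%N
  else exists X : {set 'I_n},
    [/\ #|X| = (b * a.+1)%N, #|~: X| = ((r - b) * a)%N,
        (forall x y, x \in X -> y \in ~: X -> G x y),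
        regular_in G X ((b - 1) * a.+1)%N &
        regular_in G (~: X) ((r - b - 1) * a)%N].

(* Main.v *)
Require Import Defs.
From mathcomp Require Import all_boot all_order all_algebra all_field.
From mathcomp Require Import ring lra zify.
Set Implicit Arguments. Unset Strict Implicit. Unset Printing Implicit Defensive.
Import Order.TTheory GRing.Theory Num.Theory.

Module PartA.
Local Open Scope ring_scope.

Lemma rootsC_root (p : {poly algC}) z : p != 0 -> (z \in rootsC p) = root p z.
Proof.
move=> p0; rewrite /rootsC; case: closed_field_poly_normal => s /= Hp.
apply/idP/idP.
  move=> zs; apply/rootP; rewrite Hp hornerZ horner_prod.
  apply/eqP; rewrite mulf_eq0 prodf_seq_eq0.
  have -> : has (fun i => true && (('X - i%:P).[z] == 0)) s.
    apply/hasP; exists z; first done.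
    by rewrite hornerXsubC subrr eqxx.
  by rewrite orbT.
move/rootP; rewrite Hp hornerZ horner_prod => /eqP; rewrite mulf_eq0.
rewrite lead_coef_eq0 (negbTE p0) /= prodf_seq_eq0 => /hasP [w ws].
by rewrite hornerXsubC subr_eq0 => /eqP ->.
Qed.

Lemma char_poly_neq0 n (A : 'M[algC]_n) : char_poly A != 0.
Proof. by rewrite monic_neq0 // char_poly_monic. Qed.

Lemma max_nneg (x y : algC) : 0 <= x -> 0 <= y ->
  [/\ x <= Num.max x y, y <= Num.max x y, 0 <= Num.max x y &
      forall c, x <= c -> y <= c -> Num.max x y <= c].
Proof.
move=> x0 y0; have xR : x \is Num.real by apply: ger0_real.
have yR : y \is Num.real by apply: ger0_real.
rewrite /Order.max; case: ifP => xy.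
  by split; [exact: ltW | exact: lexx | done | move=> c].
by split; [exact: lexx | rewrite real_leNgt // xy | done | move=> c].
Qed.

Lemma rho_ge0 n (A : 'M[algC]_n) : 0 <= spectral_radius A.
Proof.
rewrite /spectral_radius; elim: (rootsC _) => [|w s IH]; first by rewrite big_nil.
by rewrite big_cons; case: (max_nneg (normr_ge0 w) IH).
Qed.

Lemma eig_le_rho n (A : 'M[algC]_n) z : eigenvalue A z -> `|z| <= spectral_radius A.
Proof.
rewrite eigenvalue_root_char -rootsC_root ?char_poly_neq0 // /spectral_radius.
elim: (rootsC _) => [|w s IH] //; rewrite in_cons big_cons.
have H0 : 0 <= \big[Num.max/0]_(z0 <- s) `|z0|.
  elim: s {IH} => [|w' s' IH']; first by rewrite big_nil.
  by rewrite big_cons; case: (max_nneg (normr_ge0 w') IH').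
case: (max_nneg (normr_ge0 w) H0) => h1 h2 _ _.
case/orP => [/eqP -> //|zs]; exact: le_trans (IH zs) h2.
Qed.

Lemma rho_le n (A : 'M[algC]_n) c : 0 <= c ->
  (forall z, eigenvalue A z -> `|z| <= c) -> spectral_radius A <= c.
Proof.
move=> c0 H; rewrite /spectral_radius.
have : forall z, z \in rootsC (char_poly A) -> `|z| <= c.
  by move=> z; rewrite rootsC_root ?char_poly_neq0 // -eigenvalue_root_char; apply: H.
elim: (rootsC _) => [|w s IH] Hs; first by rewrite big_nil.
have H0 : 0 <= \big[Num.max/0]_(z0 <- s) `|z0|.
  elim: s {IH Hs} => [|w' s' IH']; first by rewrite big_nil.
  by rewrite big_cons; case: (max_nneg (normr_ge0 w') IH').
rewrite big_cons; case: (max_nneg (normr_ge0 w) H0) => _ _ _ ->//.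
  by apply: Hs; rewrite mem_head.
by apply: IH => z zs; apply: Hs; rewrite in_cons zs orbT.
Qed.

End PartA.
Import PartA.

Module PartB.
Local Open Scope ring_scope.
Local Open Scope sesquilinear_scope.

Lemma trmxC_mul m k p (X : 'M[algC]_(m, k)) (Y : 'M[algC]_(k, p)) :
  (X *m Y)^t* = Y^t* *m X^t*.
Proof. by rewrite trmx_mul map_mxM. Qed.

Lemma rayleigh n (A : 'M[algC]_n) (u : 'rV[algC]_n) : A \is hermsymmx ->
  (u *m A *m u^t*) 0 0 <= spectral_radius A * (u *m u^t*) 0 0.
Proof.
move=> Ah; have An := hermitian_normalmx Ah.
have HA := orthomx_spectralP An.
set P := spectralmx A in HA; set d := spectral_diag A in HA.
have Pu : P \is unitarymx by apply: spectral_unitarymx.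
have dR := hermitian_spectral_diag_real Ah; rewrite -/d in dR.
have PP : P *m P^t* = 1%:M by apply/unitarymxP.
have PP' : P^t* *m P = 1%:M by apply: mulmx1C.
rewrite invmx_unitary // in HA.
set w := u *m P^t*.
have E1 : u *m A *m u^t* = w *m diag_mx d *m w^t*.
  by rewrite /w HA trmxC_mul trmxCK !mulmxA.
have E2 : u *m u^t* = w *m w^t*.
  by rewrite /w trmxC_mul trmxCK -!mulmxA (mulmxA (P^t*)) PP' mul1mx.
have eigd : forall j, eigenvalue A (d 0 j).
  move=> j; apply/eigenvalueP; exists (row j P).
    rewrite -row_mul.
    have -> : P *m A = diag_mx d *m P by rewrite HA !mulmxA PP mul1mx.
    apply/rowP => k; by rewrite mul_diag_mx !mxE.
  apply/negP => /eqP Hr.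
  have : row j (P *m P^t*) = 0 by rewrite row_mul Hr mul0mx.
  rewrite PP => /rowP /(_ j); rewrite !mxE eqxx /= => /eqP.
  by rewrite oner_eq0.
rewrite E1 E2; clearbody w; rewrite mul_mx_diag !mxE mulr_sumr; apply: ler_sum => j _.
rewrite !mxE.
have -> : w 0 j * d 0 j * (w 0 j)^* = d 0 j * (w 0 j * (w 0 j)^*) by ring.
have Hn : 0 <= w 0 j * (w 0 j)^*  by rewrite -normCK exprn_ge0.
apply: (ler_wpM2r Hn).
apply: le_trans (real_ler_norm _) (eig_le_rho (eigd j)).
exact: (mxOverP dR).
Qed.

End PartB.
Import PartB.

Module PartC.
Local Open Scope ring_scope.

Lemma exists_max (T : eqType) (f : T -> algC) (s : seq T) x0 : x0 \in s ->
  (forall i, f i \is Num.real) ->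
  exists2 i0, i0 \in s & forall i, i \in s -> f i <= f i0.
Proof.
move=> xs fR; elim: s x0 xs => [//|y s IH] x0 xs.
have [ys|ys] := boolP (s == [::]).
  exists y; first by rewrite mem_head.
  by move=> i; rewrite (eqP ys) inE => /eqP ->.
have [z zs] : exists z, z \in s.
  by case: s ys {IH xs} => [//|z s _]; exists z; rewrite mem_head.
case: (IH z zs) => i0 i0s Hi0.
have [le|le] := boolP (f y <= f i0).
  exists i0; first by rewrite in_cons i0s orbT.
  move=> i; rewrite in_cons => /orP [/eqP -> //|]; exact: Hi0.
have le' : f i0 <= f y by move: le; rewrite real_leNgt // negbK => /ltW.
exists y; first by rewrite mem_head.
move=> i; rewrite in_cons => /orP [/eqP -> //|iS]; exact: le_trans (Hi0 _ iS) le'.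
Qed.

Lemma perron_le n (A : 'M[algC]_n) (x : 'rV[algC]_n) (mu : algC) :
  (forall i j, 0 <= A i j) -> (forall i, 0 < x 0 i) -> x *m A = mu *: x ->
  forall z, eigenvalue A z -> `|z| <= mu.
Proof.
move=> A0 x0 xA z /eigenvalueP [v vA v0].
have [j vj] : exists j, v 0 j != 0.
  apply/existsP; apply: contraR v0 => /existsPn H; apply/eqP/rowP => k.
  by rewrite mxE; have := H k; rewrite negbK => /eqP.
pose f i := `|v 0 i| / x 0 i.
have fR : forall i, f i \is Num.real.
  by move=> i; apply: ger0_real; rewrite divr_ge0 // ltW.
have [i0 _ Hi0] := exists_max (f := f) (s := enum 'I_n) (x0 := j) (mem_enum _ _) fR.
set t := f i0 in Hi0.
have le_vi : forall i, `|v 0 i| <= t * x 0 i.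
  move=> i; have := Hi0 i (mem_enum _ _).
  by rewrite /f ler_pdivrMr // => /le_trans; apply; rewrite lexx.
have eq_v0 : `|v 0 i0| = t * x 0 i0 by rewrite /t /f divfK // gt_eqF.
have vpos : 0 < `|v 0 i0|.
  rewrite eq_v0 mulr_gt0 //; apply: lt_le_trans (Hi0 j (mem_enum _ _)).
  by rewrite /f divr_gt0 // normr_gt0.
rewrite -(ler_pM2r vpos).
have E : `|z| * `|v 0 i0| = `|\sum_i v 0 i * A i i0|.
  by have := congr1 (fun M : 'M[algC]_(1,n) => M 0 i0) vA; rewrite /= !mxE => ->; rewrite normrM.
have Ex : \sum_i x 0 i * A i i0 = mu * x 0 i0.
  by have := congr1 (fun M : 'M[algC]_(1,n) => M 0 i0) xA; rewrite /= !mxE.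
rewrite E; apply: le_trans (ler_norm_sum _ _ _) _.
apply: le_trans (_ : _ <= \sum_i t * (x 0 i * A i i0)) _.
  apply: ler_sum => i _; rewrite normrM (ger0_norm (A0 _ _)) mulrA.
  exact: (ler_wpM2r (A0 i i0) (le_vi i)).
by rewrite -mulr_sumr Ex eq_v0 mulrCA.
Qed.

End PartC.
Import PartC.

Module PartD.

Definition deg n (G : rel 'I_n) v := #|[set w | G v w]|.
Definition cnon n (G : rel 'I_n) v := #|[set w | ~~ G v w]|.

Lemma deg_cnon n (G : rel 'I_n) v : deg G v + cnon G v = n.
Proof.
rewrite /deg /cnon -[RHS](card_ord n) -(cardsC [set w | G v w]); congr (_ + _).
by apply: eq_card => w; rewrite !inE.
Qed.

Lemma cnon_gt0 n (G : rel 'I_n) v : simple_graph G -> 0 < cnon G v.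
Proof.
move=> [_ irr]; rewrite /cnon card_gt0; apply/set0Pn; exists v.
by rewrite inE irr.
Qed.

Lemma card_sum_bool (T : finType) (A : {pred T}) : #|A| = \sum_(x : T) (x \in A).
Proof. by rewrite -sum1_card big_mkcond /=; apply: eq_bigr => x _; case: (x \in A). Qed.

Lemma nedges_sum n (G : rel 'I_n) :
  nedges G = \sum_v \sum_w (G v w && (v < w)).
Proof.
rewrite /nedges card_sum_bool pair_bigA /=.
by apply: eq_bigr => p _; rewrite inE.
Qed.

Lemma handshake n (G : rel 'I_n) : simple_graph G ->
  (nedges G).*2 = \sum_v deg G v.
Proof.
move=> [sym irr].
have E : forall v, deg G v = \sum_w (G v w && (v < w)) + \sum_w (G w v && (w < v)).
  move=> v; rewrite /deg card_sum_bool -big_split /=; apply: eq_bigr => w _.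
  rewrite inE (sym w v).
  case: (ltngtP v w) => [lt|gt|eq]; rewrite ?andbT ?andbF ?addn0 //.
  by move/val_inj: eq => ->; rewrite irr.
rewrite (eq_bigr _ (fun v _ => E v)) big_split /= -addnn nedges_sum; congr (_ + _).
by rewrite exchange_big.
Qed.

Lemma deg_in_setT n (G : rel 'I_n) v : deg_in G setT v = deg G v.
Proof. by rewrite /deg_in /deg; apply: eq_card => w; rewrite !inE. Qed.

Lemma deg_split n (G : rel 'I_n) (X : {set 'I_n}) v :
  deg G v = deg_in G X v + deg_in G (~: X) v.
Proof.
rewrite /deg /deg_in -(cardsID X [set w | G v w]); congr (_ + _).
  by apply: eq_card => w; rewrite !inE andbC.
by apply: eq_card => w; rewrite !inE andbC.
Qed.

Lemma count_mod (r m i : nat) : 0 < r -> i < r ->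
  #|[set u : 'I_m | u %% r == i]| = m %/ r + (i < m %% r).
Proof.
move=> r0 ir.
have -> : #|[set u : 'I_m | u %% r == i]| = \sum_(0 <= u < m) (u %% r == i).
  by rewrite card_sum_bool big_mkord; apply: eq_bigr => u _; rewrite inE.
elim: m => [|m IH]; first by rewrite big_geq // div0n mod0n.
rewrite big_nat_recr //= IH divnS // modnS.
have H1 := divn_eq m r; have H2 := ltn_pmod m r0.
case: ifP => dv.
  have H3 : m.+1 %/ r * r = m.+1 by apply/eqP; rewrite -dvdn_eq.
  rewrite divnS // dv in H3.
  have E : m %% r = r.-1 by nia.
  rewrite E; case: (ltngtP i r.-1) => [h|h|h] /=; try lia.
rewrite /=; case: (ltngtP i (m %% r)) => [h|h|h] /=; try lia.
Qed.

Lemma count_lt (r m j : nat) : 0 < r -> j <= r ->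
  #|[set u : 'I_m | u %% r < j]| = m %/ r * j + minn (m %% r) j.
Proof.
move=> r0 jr.
have -> : #|[set u : 'I_m | u %% r < j]| = \sum_(0 <= u < m) (u %% r < j).
  by rewrite card_sum_bool big_mkord; apply: eq_bigr => u _; rewrite inE.
elim: m => [|m IH]; first by rewrite big_geq // div0n mod0n min0n.
rewrite big_nat_recr //= IH divnS // modnS.
have H1 := divn_eq m r; have H2 := ltn_pmod m r0.
case: ifP => dv.
  have H3 : m.+1 %/ r * r = m.+1 by apply/eqP; rewrite -dvdn_eq.
  rewrite divnS // dv in H3.
  have E : m %% r = r.-1 by nia.
  rewrite E; case: (ltngtP r.-1 j) => [h|h|h] /=; try lia.
change (nat_of_bool false) with 0.
case: (ltngtP (m %% r) j) => [h|h|h] /=; try lia.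
Qed.

Definition profile n r (G : rel 'I_n) (X : {set 'I_n}) :=
  [/\ #|X| = (n %% r) * (n %/ r).+1,
      forall v, cnon G v = n %/ r + (v \in X) &
      forall v w, ~~ G v w -> (v \in X) = (w \in X)].

Lemma turan_simple r n : simple_graph (turan r n).
Proof.
split; first by move=> u v; rewrite /turan eq_sym.
by move=> u; rewrite /turan eqxx.
Qed.

Lemma turan_profile r n : 0 < r ->
  profile r (turan r n) [set v : 'I_n | v %% r < n %% r].
Proof.
move=> r0; split.
- rewrite count_lt //; last by apply: ltnW; rewrite ltn_pmod.
  by rewrite minnn mulnS addnC mulnC.
- move=> v; rewrite /cnon inE -count_mod ?ltn_pmod //.
  by apply: eq_card => w; rewrite !inE /turan negbK eq_sym.
- by move=> v w; rewrite /turan negbK !inE => /eqP ->.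
Qed.

Lemma cnonE n (G : rel 'I_n) v : cnon G v = n - deg G v.
Proof. by have := deg_cnon G v; lia. Qed.

Lemma deg_in_full n (G : rel 'I_n) (A : {set 'I_n}) v :
  (forall w, w \in A -> G v w) -> deg_in G A v = #|A|.
Proof.
move=> H; rewrite /deg_in; apply: eq_card => w; rewrite !inE.
by case wA: (w \in A) => //=; rewrite H.
Qed.

Lemma cardsC' n (X : {set 'I_n}) : #|~: X| = n - #|X|.
Proof. by have := cardsC X; rewrite card_ord; lia. Qed.

Lemma profile_family r n (G : rel 'I_n) X : 0 < r -> simple_graph G ->
  profile r G X -> family_F r G.
Proof.
move=> r0 [sym irr] [cX cv nadj]; rewrite /family_F.
have H1 := divn_eq n r; have H2 := ltn_pmod n r0.
set a := n %/ r in H1 H2 cX cv *; set b := n %% r in H1 H2 cX cv *.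
case: ifP => [/eqP b0|b0].
  have X0 : X = set0 by apply/cards0_eq; rewrite cX b0.
  move=> v _; rewrite deg_in_setT.
  have := deg_cnon G v; rewrite cv X0 inE addn0.
  rewrite b0 addn0 in H1; nia.
have b1 : 0 < b by rewrite lt0n b0.
have cross : forall x y, x \in X -> y \in ~: X -> G x y.
  move=> x y xX; rewrite inE => yX; apply/negP => /negP /nadj.
  by rewrite xX (negbTE yX).
exists X; split => //.
- by rewrite cardsC' cX; nia.
- move=> x xX; have := deg_split G (~: X) x; rewrite setCK.
  rewrite (deg_in_full (A := ~: X)); last by move=> w; apply: cross.
  have := deg_cnon G x; rewrite cv xX cardsC' cX; nia.
- move=> y yX; have := deg_split G X y.
  rewrite (deg_in_full (A := X)); last by move=> w wX; rewrite sym; apply: cross.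
  have := deg_cnon G y; rewrite cv; rewrite inE in yX; rewrite (negbTE yX) cX; nia.
Qed.

Lemma family_profile r n (G : rel 'I_n) : 0 < r -> simple_graph G ->
  family_F r G -> exists X, profile r G X.
Proof.
move=> r0 [sym irr]; rewrite /family_F.
have H1 := divn_eq n r; have H2 := ltn_pmod n r0.
set a := n %/ r in H1 H2 *; set b := n %% r in H1 H2 *.
case: ifP => [/eqP b0|b0].
  move=> reg; exists set0; split.
  - by rewrite cards0 -/b b0.
  - move=> v; rewrite inE addn0 cnonE -deg_in_setT reg ?inE // -/a.
    rewrite b0 addn0 in H1; nia.
  - by move=> v w _; rewrite !inE.
have b1 : 0 < b by rewrite lt0n b0.
move=> [X [cX cXc cross regX regY]]; exists X; split => //.
- move=> v; rewrite cnonE (deg_split G X v) -/a.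
  case vX: (v \in X).
    rewrite regX // (deg_in_full (A := ~: X)); last by move=> w; apply: cross.
    rewrite cXc; nia.
  rewrite regY ?inE ?vX // (deg_in_full (A := X)); last first.
    by move=> w wX; rewrite sym; apply: cross; rewrite ?inE ?vX.
  rewrite cX; nia.
- move=> v w; case vX: (v \in X); case wX: (w \in X) => //.
    by rewrite cross // inE wX.
  by rewrite sym cross // inE vX.
Qed.

End PartD.
Import PartD.

Module PartE.
Local Open Scope ring_scope.

Lemma mu_exists (n a b : nat) : (2 <= n)%N -> (b * a.+1 <= n)%N -> (a + b <= n)%N ->
  exists mu : algR, [/\ 0 <= mu, 0 < mu + a%:R &
     (mu + a%:R) * (mu + a%:R + 1) = n%:R * (mu + a%:R + 1) - (b * a.+1)%:R].
Proof.
move=> n2 ban abn.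
pose m : algR := (n - b * a.+1)%N%:R.
pose N1 : algR := (n.-1)%:R.
pose D := N1 ^+ 2 + 4 * m.
have m0 : 0 <= m by rewrite ler0n.
have D0 : 0 <= D by rewrite /D addr_ge0 ?sqr_ge0 ?mulr_ge0.
pose s := Num.sqrt D.
have s0 : 0 <= s by rewrite sqrtr_ge0.
have ss : s * s = D by rewrite -expr2 sqr_sqrtr.
pose P := (N1 + s) / 2.
have N1v : N1 = n%:R - 1 by rewrite /N1 -subn1 natrB; [done|lia].
have mv : m = n%:R - (b * a.+1)%:R by rewrite /m natrB.
have N11 : 1 <= N1 by rewrite /N1 ler1n; lia.
exists (P - a%:R); rewrite subrK; split.
- rewrite subr_ge0.
  have key : D - (2 * a%:R - N1) ^+ 2 = 4 * (a%:R + 1) * (n%:R - a%:R - b%:R).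
    rewrite /D mv N1v natrM; ring.
  have nab : (a + b)%:R <= n%:R :> algR by rewrite ler_nat.
  rewrite natrD in nab.
  rewrite /P ler_pdivlMr //.
  nra.
- rewrite /P; lra.
- rewrite /P.
  have HD : s * s = N1 ^+ 2 + 4 * m by rewrite ss.
  rewrite mv N1v in HD; rewrite N1v.
  nra.
Qed.

Section Conv.
Variables (n a b : nat) (mu : algR).
Local Notation P := (mu + a%:R).
Hypothesis mu0 : 0 <= mu.
Hypothesis P0 : 0 < P.
Hypothesis Peq : P * (P + 1) = n%:R * (P + 1) - (b * a.+1)%:R.

Definition qf (c : nat) : algR :=
  (c%:R - a%:R) * (c%:R - a%:R - 1) / ((mu + c%:R) * P * (P + 1)).

Lemma conv_eq (c : nat) : (0 < c)%N ->
  (mu + c%:R)^-1 = P^-1 - (c%:R - a%:R) / (P * (P + 1)) + qf c.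
Proof.
have ? := mu0; have ? := P0.
move=> c0; have c1 : 1 <= c%:R :> algR by rewrite ler1n.
have h1 : mu + c%:R != 0 by apply/lt0r_neq0; lra.
have h2 : P != 0 by apply/lt0r_neq0.
have h3 : P + 1 != 0 by apply/lt0r_neq0; lra.
by rewrite /qf; field; rewrite ?h1 ?h2 ?h3 ?mulf_neq0.
Qed.

Lemma qf_ge0 (c : nat) : (0 < c)%N -> 0 <= qf c.
Proof.
have ? := mu0; have ? := P0.
move=> c0; have c1 : 1 <= c%:R :> algR by rewrite ler1n.
rewrite /qf; apply: divr_ge0; last first.
  by apply: mulr_ge0; [apply: mulr_ge0|]; lra.
have [ca|ac] := leqP c a.
  have : c%:R <= a%:R :> algR by rewrite ler_nat.
  nra.
have : a%:R + 1 <= c%:R :> algR by rewrite natr1 ler_nat.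
nra.
Qed.

Lemma qf_eq0 (c : nat) : (0 < c)%N -> qf c = 0 -> c = a \/ c = a.+1.
Proof.
have ? := mu0; have ? := P0.
move=> c0; have c1 : 1 <= c%:R :> algR by rewrite ler1n.
rewrite /qf => /eqP; rewrite mulf_eq0 invr_eq0 !mulf_eq0.
have -> : (mu + c%:R == 0) = false by apply/negbTE/lt0r_neq0; lra.
have -> : (P == 0) = false by apply/negbTE/lt0r_neq0.
have -> : (P + 1 == 0) = false by apply/negbTE/lt0r_neq0; lra.
rewrite !orbF subr_eq0 subr_eq add0r subr_eq addrC natr1 !eqr_nat.
by case/orP => /eqP ->; [left|right].
Qed.

Lemma Y_decomp (c : 'I_n -> nat) : (forall v, 0 < c v)%N ->
  \sum_v (mu + (c v)%:R)^-1 - 1 =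
  ((n * a + b * a.+1)%N%:R - (\sum_v c v)%N%:R) / (P * (P + 1)) + \sum_v qf (c v).
Proof.
have ? := mu0; have ? := P0.
move=> c0; rewrite (eq_bigr _ (fun v _ => conv_eq (c0 v))).
rewrite !big_split /= sumrN -mulr_suml sumrB !sumr_const card_ord natr_sum.
rewrite -[P^-1 *+ n]mulr_natr -[a%:R *+ n]mulr_natr.
have h2 : P != 0 by apply/lt0r_neq0.
have h3 : P + 1 != 0 by apply/lt0r_neq0; lra.
set Q := \sum_(i < n) qf (c i).
set C := \sum_(i < n) (c i)%:R.
rewrite natrD !natrM.
have E1 : 1 = (n%:R * (P + 1) - (b%:R * a.+1%:R)) / (P * (P + 1)).
  by rewrite -natrM -Peq divff // mulf_neq0.
rewrite [X in _ + Q - X]E1 -natr1.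
by field; rewrite h2 h3.
Qed.

End Conv.

End PartE.
Import PartE.

Module PartF.
Local Open Scope ring_scope.

Definition yv n (G : rel 'I_n) (mu : algR) v : algR := (mu + (cnon G v)%:R)^-1.

Lemma cnon_sum_R n (G : rel 'I_n) w :
  \sum_v ((~~ G w v)%:R : algR) = (cnon G w)%:R.
Proof.
by rewrite /cnon card_sum_bool natr_sum; apply: eq_bigr => v _; rewrite inE.
Qed.

Lemma split_adj n (G : rel 'I_n) (F : 'I_n -> algR) w :
  \sum_v (G w v)%:R * F v = \sum_v F v - \sum_v (~~ G w v)%:R * F v.
Proof.
apply/eqP; rewrite eq_sym subr_eq -big_split /=; apply/eqP; apply: eq_bigr => v _.
by case: (G w v); rewrite /= ?mul1r ?mul0r ?addr0 ?add0r.
Qed.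

Lemma yv_gt0 n (G : rel 'I_n) mu v : simple_graph G -> 0 <= mu -> 0 < yv G mu v.
Proof.
move=> sG mu0; rewrite /yv invr_gt0.
have : (1 <= cnon G v)%N by apply: cnon_gt0.
rewrite -(ler_nat algR) => h; lra.
Qed.

Lemma S_identity n (G : rel 'I_n) (mu : algR) : simple_graph G -> 0 <= mu ->
  let y := yv G mu in let Y := \sum_v y v in
  \sum_v \sum_w y v * (G v w)%:R * y w - mu * \sum_v y v ^+ 2 =
  Y * (Y - 1) + (\sum_v \sum_w (~~ G v w)%:R * (y v - y w) ^+ 2) / 2.
Proof.
move=> sG mu0 y Y; have [sym irr] := sG.
set S := \sum_v \sum_w _.
set N := \sum_v \sum_w (~~ G v w)%:R * (y v * y w).
set C2 := \sum_v (cnon G v)%:R * y v ^+ 2.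
set Q := \sum_v y v ^+ 2.
set D := \sum_v \sum_w _.
have ES : S = Y * Y - N.
  rewrite /S /N /Y mulr_suml -sumrB; apply: eq_bigr => v _.
  transitivity (y v * \sum_w (G v w)%:R * y w).
    by rewrite mulr_sumr; apply: eq_bigr => w _; rewrite mulrA.
  rewrite split_adj mulrBr mulr_sumr; congr (_ - _).
  by rewrite mulr_sumr; apply: eq_bigr => w _; rewrite mulrCA.
have ED : D = C2 + C2 - 2 * N.
  have E1 : \sum_v \sum_w (~~ G v w)%:R * y v ^+ 2 = C2.
    apply: eq_bigr => v _; rewrite -mulr_suml cnon_sum_R //.
  have E2 : \sum_v \sum_w (~~ G v w)%:R * y w ^+ 2 = C2.
    rewrite exchange_big; apply: eq_bigr => w _.
    under eq_bigr => v _ do rewrite (sym v w).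
    by rewrite -mulr_suml cnon_sum_R.
  rewrite -{1}E1 -E2 /D /N mulr_sumr -!big_split /= -sumrB; apply: eq_bigr => v _.
  rewrite mulr_sumr -!big_split /= -sumrB; apply: eq_bigr => w _.
  ring.
have EQ : mu * Q + C2 = Y.
  rewrite /Q /C2 /Y mulr_sumr -big_split /=; apply: eq_bigr => v _.
  have h : mu + (cnon G v)%:R != 0.
    apply/lt0r_neq0; have : (1 <= cnon G v)%N by apply: cnon_gt0.
    rewrite -(ler_nat algR) => h; lra.
  rewrite /y /yv; field; by rewrite h.
by rewrite ES ED -EQ; field.
Qed.

Lemma valR_le (x y : algR) : (algRval x <= algRval y) = (x <= y).
Proof. by []. Qed.
Lemma valR_lt (x y : algR) : (algRval x < algRval y) = (x < y).
Proof. by []. Qed.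

Lemma eigen_real n (G : rel 'I_n) (mu : algR) : simple_graph G -> 0 <= mu ->
  \sum_v yv G mu v = 1 -> (forall v w, ~~ G v w -> cnon G v = cnon G w) ->
  forall w, \sum_v yv G mu v * (G v w)%:R = mu * yv G mu w.
Proof.
move=> sG mu0 Y1 nadj w; have [sym irr] := sG.
transitivity (\sum_v (G w v)%:R * yv G mu v).
  by apply: eq_bigr => v _; rewrite sym mulrC.
rewrite split_adj Y1.
transitivity (1 - \sum_v (~~ G w v)%:R * yv G mu w).
  congr (_ - _); apply: eq_bigr => v _.
  by case h: (G w v); rewrite /= ?mul0r // /yv (nadj w v) ?h.
rewrite -mulr_suml cnon_sum_R /yv.
have h : mu + (cnon G w)%:R != 0.
  apply/lt0r_neq0; have : (1 <= cnon G w)%N by apply: cnon_gt0.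
  rewrite -(ler_nat algR) => h; lra.
by field.
Qed.

Lemma adj_herm n (G : rel 'I_n) : simple_graph G -> adjmx G \is hermsymmx.
Proof.
move=> [sym irr]; apply/is_hermitianmxP; rewrite expr0 scale1r.
by apply/matrixP => i j; rewrite !mxE conjC_nat sym.
Qed.

Lemma lambda_profile n (G : rel 'I_n) (mu : algR) : (0 < n)%N -> simple_graph G -> 0 <= mu ->
  \sum_v yv G mu v = 1 -> (forall v w, ~~ G v w -> cnon G v = cnon G w) ->
  lambda G = algRval mu.
Proof.
move=> n0 sG mu0 Y1 nadj.
pose x : 'rV[algC]_n := \row_v algRval (yv G mu v).
have xA : x *m adjmx G = algRval mu *: x.
  apply/rowP => w; rewrite !mxE.
  have := congr1 algRval (eigen_real sG mu0 Y1 nadj w).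
  rewrite rmorphM /= raddf_sum /= => <-.
  by apply: eq_bigr => v _; rewrite !mxE /yv fmorphV rmorphD /= !rmorph_nat.
have A0 : forall i j, 0 <= adjmx G i j by move=> i j; rewrite mxE ler0n.
have x0 : forall i, 0 < x 0 i by move=> i; rewrite mxE -(rmorph0 algRval) valR_lt yv_gt0.
have mu0' : 0 <= algRval mu by rewrite -(rmorph0 algRval) valR_le.
apply/eqP; rewrite eq_le; apply/andP; split.
  by rewrite /lambda; apply: rho_le => // z; apply: (perron_le A0 x0 xA).
have -> : algRval mu = `|algRval mu| by rewrite ger0_norm.
apply: eig_le_rho; apply/eigenvalueP; exists x => //.
apply/negP => /eqP/rowP /(_ (Ordinal n0)) H.
by have := x0 (Ordinal n0); rewrite H mxE ltxx.
Qed.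

End PartF.
Import PartF.

Module PartG.
Local Open Scope ring_scope.
Local Open Scope sesquilinear_scope.

Lemma rayleigh_graph n (G : rel 'I_n) (mu : algR) : simple_graph G ->
  algRval (\sum_v \sum_w yv G mu v * (G v w)%:R * yv G mu w) <=
  lambda G * algRval (\sum_v yv G mu v ^+ 2).
Proof.
move=> sG.
pose u : 'rV[algC]_n := \row_v algRval (yv G mu v).
have := rayleigh u (adj_herm sG).
have E1 : (u *m adjmx G *m (u ^t*)) 0 0 =
          algRval (\sum_v \sum_w yv G mu v * (G v w)%:R * yv G mu w).
  rewrite !mxE raddf_sum; under [RHS]eq_bigr => i _ do rewrite raddf_sum.
  rewrite [RHS]exchange_big /=; apply: eq_bigr => w _.
  rewrite !mxE mulr_suml; apply: eq_bigr => v _.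
  by rewrite !mxE conj_Creal ?(valP (yv G mu w)) // /yv !fmorphV !rmorphD /= !rmorph_nat.
have E2 : (u *m (u ^t*)) 0 0 = algRval (\sum_v yv G mu v ^+ 2).
  rewrite !mxE raddf_sum /=; apply: eq_bigr => v _.
  by rewrite !mxE conj_Creal ?(valP (yv G mu v)) // rmorphXn.
by rewrite E1 E2.
Qed.

Lemma main_ineq r n (G : rel 'I_n) (mu : algR) :
  (0 < n)%N -> simple_graph G -> 0 <= mu -> 0 < mu + (n %/ r)%N%:R ->
  (mu + (n %/ r)%N%:R) * (mu + (n %/ r)%N%:R + 1) =
     n%:R * (mu + (n %/ r)%N%:R + 1) - ((n %% r) * (n %/ r).+1)%N%:R ->
  (\sum_v cnon G v <= n * (n %/ r) + (n %% r) * (n %/ r).+1)%N ->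
  algRval mu <= lambda G /\ (lambda G = algRval mu -> exists X, profile r G X).
Proof.
move=> n0 sG mu0 P0 Peq Kle.
set a := (n %/ r)%N in P0 Peq Kle *; set b := (n %% r)%N in Peq Kle *.
have c0 : forall v, (0 < cnon G v)%N by move=> v; apply: cnon_gt0.
have YD := Y_decomp mu0 P0 Peq c0.
set y := yv G mu.
set Y := \sum_v y v.
have YD' : Y - 1 = ((n * a + b * a.+1)%N%:R - (\sum_v cnon G v)%N%:R) / ((mu + a%:R) * (mu + a%:R + 1))
                   + \sum_v qf a mu (cnon G v) by rewrite /Y /y /yv YD.
set t1 := _ / _ in YD'.
set Qs := \sum_v qf _ _ _ in YD'.
have t1ge : 0 <= t1.
  rewrite /t1 divr_ge0 //; last by apply: mulr_ge0; lra.
  by rewrite subr_ge0 ler_nat.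
have Qsge : 0 <= Qs by rewrite /Qs sumr_ge0 // => v _; apply: (qf_ge0 mu0 P0 (c0 v)).
have Y1 : 1 <= Y by lra.
have SI := S_identity sG mu0; cbv zeta in SI; rewrite -/y -/Y in SI.
set S := \sum_v \sum_w _ in SI.
set Q := \sum_v y v ^+ 2 in SI.
set D := \sum_v \sum_w _ in SI.
have Dge : 0 <= D.
  by rewrite /D sumr_ge0 // => v _; rewrite sumr_ge0 // => w _; rewrite mulr_ge0 ?ler0n ?sqr_ge0.
have YY : 0 <= Y * (Y - 1) by apply: mulr_ge0; lra.
have Qpos : 0 < Q.
  rewrite /Q (bigD1 (Ordinal n0)) //=; apply: ltr_wpDr.
    by rewrite sumr_ge0 // => v _; rewrite sqr_ge0.
  by rewrite exprn_gt0 // /y yv_gt0.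
have RG := rayleigh_graph mu sG; rewrite -/y -/S -/Q in RG.
have Hval : forall z : algR, 0 <= z -> 0 <= algRval z.
  by move=> z z0; rewrite -(rmorph0 algRval) valR_le.
split.
  have h1 : mu * Q <= S by lra.
  have h2 : algRval mu * algRval Q <= lambda G * algRval Q.
    rewrite -rmorphM; apply: le_trans RG; by rewrite valR_le.
  have vQ : 0 < algRval Q by rewrite -(rmorph0 algRval) valR_lt.
  by rewrite ler_pM2r in h2.
move=> lamE; rewrite lamE -rmorphM valR_le in RG.
have Z1 : Y * (Y - 1) = 0 by lra.
have Z2 : D = 0 by lra.
have Yeq : Y = 1.
  move/eqP: Z1; rewrite mulf_eq0 => /orP [/eqP|]; first lra.
  by rewrite subr_eq0 => /eqP.
have t10 : t1 = 0 by lra.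
have Qs0 : Qs = 0 by lra.
have Keq : (\sum_v cnon G v = n * a + b * a.+1)%N.
  move/eqP: t10; rewrite /t1 mulf_eq0 invr_eq0 mulf_eq0.
  have -> : (mu + a%:R == 0) = false by apply/negbTE/lt0r_neq0.
  have -> : (mu + a%:R + 1 == 0) = false by apply/negbTE/lt0r_neq0; lra.
  by rewrite !orbF subr_eq0 eqr_nat => /eqP ->.
have qv : forall v, cnon G v = a \/ cnon G v = a.+1.
  move=> v; apply: (qf_eq0 mu0 P0 (c0 v)); move: Qs0; rewrite /Qs => /eqP.
  rewrite psumr_eq0 => [/allP /(_ v (mem_index_enum v)) /implyP /(_ isT) /eqP //|].
  by move=> w _; apply: (qf_ge0 mu0 P0 (c0 w)).
have nadj : forall v w, ~~ G v w -> cnon G v = cnon G w.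
  move=> v w nvw; move: Z2; rewrite /D => /eqP.
  rewrite psumr_eq0 => [/allP /(_ v (mem_index_enum v)) /implyP /(_ isT)|]; last first.
    by move=> v' _; rewrite sumr_ge0 // => w' _; rewrite mulr_ge0 ?ler0n ?sqr_ge0.
  rewrite psumr_eq0 => [/allP /(_ w (mem_index_enum w)) /implyP /(_ isT)|]; last first.
    by move=> w' _; rewrite mulr_ge0 ?ler0n ?sqr_ge0.
  rewrite nvw mul1r sqrf_eq0 subr_eq0 /y /yv => /eqP /invr_inj /addrI /eqP.
  by rewrite eqr_nat => /eqP.
exists [set v | cnon G v == a.+1]; split.
- have : (\sum_v cnon G v = \sum_v (a + (v \in [set v | cnon G v == a.+1])))%N.
    apply: eq_bigr => v _; rewrite inE; case: (qv v) => ->; rewrite ?eqxx ?addn1 //.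
    by rewrite (_ : (a == a.+1) = false) ?addn0 //; apply/negbTE; rewrite neq_ltn ltnSn.
  by rewrite big_split /= sum_nat_const card_ord -card_sum_bool Keq -/a -/b; move/eqP; rewrite eqn_add2l => /eqP ->.
- move=> v; rewrite inE -/a; case: (qv v) => ->; rewrite ?eqxx ?addn1 //.
  by rewrite (_ : (a == a.+1) = false) ?addn0 //; apply/negbTE; rewrite neq_ltn ltnSn.
- by move=> v w /nadj; rewrite !inE => ->.
Qed.

Lemma profile_sum r n (G : rel 'I_n) X : profile r G X ->
  (\sum_v cnon G v = n * (n %/ r) + (n %% r) * (n %/ r).+1)%N.
Proof.
move=> [cX cv _]; rewrite (eq_bigr _ (fun v _ => cv v)) big_split /= sum_nat_const.
by rewrite card_ord -card_sum_bool cX.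
Qed.

Lemma profile_lambda r n (G : rel 'I_n) X (mu : algR) :
  (0 < n)%N -> simple_graph G -> 0 <= mu -> 0 < mu + (n %/ r)%N%:R ->
  (mu + (n %/ r)%N%:R) * (mu + (n %/ r)%N%:R + 1) =
     n%:R * (mu + (n %/ r)%N%:R + 1) - ((n %% r) * (n %/ r).+1)%N%:R ->
  profile r G X -> lambda G = algRval mu.
Proof.
move=> n0 sG mu0 P0 Peq pG.
have c0 : forall v, (0 < cnon G v)%N by move=> v; apply: cnon_gt0.
have YD := Y_decomp mu0 P0 Peq c0.
rewrite (profile_sum pG) subrr mul0r add0r in YD.
have q0 : \sum_v qf (n %/ r) mu (cnon G v) = 0.
  apply: big1 => v _; have [_ cv _] := pG; rewrite cv /qf.
  case: (v \in X); rewrite /= ?addn0 ?addn1 ?subrr ?mul0r //.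
  by rewrite -natr1 addrAC subrr add0r subrr mulr0 mul0r.
rewrite q0 in YD; move/eqP: YD; rewrite subr_eq0 => /eqP YD.
apply: lambda_profile => //.
have [_ cv nadj] := pG.
by move=> v w /nadj h; rewrite !cv h.
Qed.

End PartG.
Import PartG.

Local Open Scope ring_scope.

Lemma edges_cnon n (G : rel 'I_n) : simple_graph G ->
  ((nedges G).*2 + \sum_v cnon G v = n * n)%N.
Proof.
move=> sG; rewrite handshake // -big_split /=.
rewrite (eq_bigr (fun _ => n)) ?sum_nat_const ?card_ord //.
by move=> v _; rewrite deg_cnon.
Qed.

Lemma profile_ext r n (G H : rel 'I_n) X : (forall u v, G u v = H u v) ->
  profile r G X -> profile r H X.
Proof.
move=> GH [cX cv nadj]; split => //.
- move=> v; rewrite -cv /cnon; apply: eq_card => w; by rewrite !inE GH.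
- by move=> v w; rewrite -GH; apply: nadj.
Qed.

Theorem theorem1p7 (r n : nat) (G : rel 'I_n) :
  (2 <= r)%N -> simple_graph G ->
  [/\ (nedges (turan r n) <= nedges G)%N -> lambda (turan r n) <= lambda G,
      (nedges (turan r n) <= nedges G)%N -> lambda G = lambda (turan r n) ->
        family_F r G &
      family_F r G -> nedges G = nedges (turan r n) /\ lambda G = lambda (turan r n)].
Proof.
move=> r2 sG; have r0 : (0 < r)%N by lia.
have sT := turan_simple r n.
have pT := turan_profile n r0.
have [n1|n2] := leqP n 1.
  have GT : forall u v, G u v = turan r n u v.
    move=> u v; have uv : u = v by apply: ord_inj; have := ltn_ord u; have := ltn_ord v; lia.
    by rewrite uv; case: sG => _ ->; rewrite /turan eqxx.
  have adjE : adjmx G = adjmx (turan r n) by apply/matrixP => i j; rewrite !mxE GT.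
  have eE : nedges G = nedges (turan r n).
    by rewrite /nedges; apply: eq_card => p; rewrite !inE GT.
  have lamE : lambda G = lambda (turan r n) by rewrite /lambda adjE.
  have pG : profile r G [set v : 'I_n | (v %% r < n %% r)%N].
    by apply: profile_ext pT => u v; rewrite GT.
  split.
  - by rewrite lamE.
  - by move=> _ _; apply: profile_family pG.
  - by [].
have H1 := divn_eq n r; have H2 := ltn_pmod n r0.
have [mu [mu0 P0 Peq]] : exists mu : algR, [/\ 0 <= mu, 0 < mu + (n %/ r)%N%:R &
     (mu + (n %/ r)%N%:R) * (mu + (n %/ r)%N%:R + 1) =
       n%:R * (mu + (n %/ r)%N%:R + 1) - ((n %% r) * (n %/ r).+1)%N%:R].
  apply: mu_exists => //; move: H1 H2; move: (n %/ r)%N (n %% r)%N => a b; nia.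
have n0 : (0 < n)%N by lia.
have lamT := profile_lambda n0 sT mu0 P0 Peq pT.
have sumT := profile_sum pT.
have ecT := edges_cnon sT; have ecG := edges_cnon sG.
split.
- move=> le; rewrite lamT.
  have Kle : (\sum_v cnon G v <= n * (n %/ r) + (n %% r) * (n %/ r).+1)%N by lia.
  by case: (main_ineq n0 sG mu0 P0 Peq Kle).
- move=> le lamE.
  have Kle : (\sum_v cnon G v <= n * (n %/ r) + (n %% r) * (n %/ r).+1)%N by lia.
  case: (main_ineq n0 sG mu0 P0 Peq Kle) => _ /(_ (etrans lamE lamT)) [X pG].
  exact: profile_family pG.
- move=> fG; have [X pG] := family_profile r0 sG fG.
  split; last by rewrite lamT (profile_lambda n0 sG mu0 P0 Peq pG).
  have := profile_sum pG; lia.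
Qed.
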